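(* Fix $K\ge1$, points $\mathbf{w}_1,\dots,\mathbf{w}_K\in\mathbb{R}^2$ and constants $H>0$, $\rho_0>0$, $\sigma^2>0$, $r^*>0$, $P_c\ge0$, $E_1,\dots,E_K>0$, $\tilde P_1,\dots,\tilde P_K>0$. For $\mathbf{q}\in\mathbb{R}^2$ write $d_k=\sqrt{\|\mathbf{q}-\mathbf{w}_k\|^2+H^2}$ and $h_k=\rho_0/d_k^2$. Problem (P1): minimize $\zeta$ over $(\zeta,\mathbf{q},\mathbf{p},\pi)$ with $\zeta\in\mathbb{R}$, $\mathbf q\in\mathbb{R}^2$, $\mathbf p\in\mathbb{R}^K$, $\pi$ a permutation of $\{1,\dots,K\}$, subject to, for all $m$: $p_{\pi(m)}+P_c\le\zeta E_{\pi(m)}$; $0\le p_{\pi(m)}\le\tilde P_{\pi(m)}$; $\log_2\big(1+\frac{p_{\pi(m)}h_{\pi(m)}}{\sum_{n=m+1}^Kp_{\pi(n)}h_{\pi(n)}+\sigma^2}\big)\ge r^*$; and $d_{\pi(1)}\le d_{\pi(2)}\le\dots\le d_{\pi(K)}$. Problem (P2): minimize $\zeta$ over $(\zeta,\mathbf{q},\mathbf{p},\boldsymbol\alpha)$ with $\boldsymbol\alpha=(\alpha_{k,j})_{k,j=1}^K$, subject to, for all $k$: $p_k+P_c\le\zeta E_k$; $0\le p_k\le\tilde P_k$; $\log_2\big(1+\frac{p_kh_k}{\sum_{j\ne k}\alpha_{k,j}p_jh_j+\sigma^2}\big)\ge r^*$; for all $k\ne j$: $\alpha_{k,j}=0$ if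 $d_k>d_j$, $\alpha_{k,j}=1$ if $d_k<d_j$, $\alpha_{k,j}\in\{0,1\}$ if $d_k=d_j$; $\alpha_{k,k}=0$; $\alpha_{k,j}+\alpha_{j,k}=1$ for $k\ne j$; $\alpha_{k,j}+\alpha_{j,i}-1\le\alpha_{k,i}$ for all $k,j,i$. Let $(\zeta,\mathbf{q},\mathbf{p},\boldsymbol\alpha)$ be feasible for (P2), and let $f(k)=K-\sum_{j=1}^K\alpha_{k,j}$. Then $f$ is a permutation of $\{1,\dots,K\}$, and setting $\pi'=f^{-1}$ and $\mathbf p'$ with $p'_{\pi'(m)}=p_{f^{-1}(m)}$ for all $m$, the tuple $(\zeta,\mathbf q,\mathbf p',\pi')$ is feasible for (P1); moreover the objective value of (P1) at $(\mathbf q,\mathbf p',\pi')$ equals that of (P2) at $(\mathbf q,\mathbf p,\boldsymbol\alpha)$ (both equal the least admissible $\zeta$, namely $\max_k (p_k+P_c)/E_k$).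
   Context: (P1) models maximizing the minimum device lifetime $E_k/(p_k+P_c)$ (via $\zeta=1/\text{lifetime}$) in uplink NOMA to a UAV with permutation decoding order $\pi$ ($\pi(m)=k$: device $k$ is decoded $m$-th); (P2) is the same with binary decoding-order variables $\alpha_{k,j}$ ($\alpha_{k,j}=1$: device $k$ decoded before device $j$). $\tilde P_k$ is the allowable transmit power of device $k$. *)

(* Defs.v *)
From HB Require Import structures.
From mathcomp Require Import all_boot all_order all_fingroup all_algebra.
From mathcomp Require Import reals exp.
Set Implicit Arguments. Unset Strict Implicit. Unset Printing Implicit Defensive.
Import Order.TTheory GRing.Theory Num.Theory.
Local Open Scope ring_scope.

Definition log2 {R : realType} (x : R) : R := ln x / ln 2.

Definition dist {R : realType} (H : R) (q w : R * R) : R :=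
  Num.sqrt ((q.1 - w.1) ^+ 2 + (q.2 - w.2) ^+ 2 + H ^+ 2).

Definition gain {R : realType} (rho0 H : R) (q w : R * R) : R :=
  rho0 / (dist H q w) ^+ 2.

(* Feasibility for (P1); devices indexed by 'I_K (0-based), pi m = device decoded (m+1)-th *)
Definition feasible1 {R : realType} (K : nat) (w : 'I_K -> R * R)
  (H rho0 sigma2 rstar Pc : R) (E Pt : 'I_K -> R)
  (zeta : R) (q : R * R) (p : 'I_K -> R) (pi : {perm 'I_K}) : Prop :=
  let h k := gain rho0 H q (w k) in
  let d k := dist H q (w k) in
  [/\ (forall m : 'I_K, p (pi m) + Pc <= zeta * E (pi m)),
      (forall m : 'I_K, 0 <= p (pi m) <= Pt (pi m)),
      (forall m : 'I_K,
          rstar <= log2 (1 + p (pi m) * h (pi m) /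
                   (\sum_(n < K | (m < n)%N) p (pi n) * h (pi n) + sigma2))) &
      (forall m n : 'I_K, (m <= n)%N -> d (pi m) <= d (pi n))].

(* Feasibility for (P2); alpha k j = 1 means device k decoded before device j *)
Definition feasible2 {R : realType} (K : nat) (w : 'I_K -> R * R)
  (H rho0 sigma2 rstar Pc : R) (E Pt : 'I_K -> R)
  (zeta : R) (q : R * R) (p : 'I_K -> R) (alpha : 'I_K -> 'I_K -> R) : Prop :=
  let h k := gain rho0 H q (w k) in
  let d k := dist H q (w k) in
  [/\ (forall k : 'I_K, p k + Pc <= zeta * E k),
      (forall k : 'I_K, 0 <= p k <= Pt k) &
      (forall k : 'I_K,
          rstar <= log2 (1 + p k * h k /
                   (\sum_(j < K | j != k) alpha k j * p j * h j + sigma2)))] /\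
  [/\
      (forall k j : 'I_K, k != j ->
          [/\ d j < d k -> alpha k j = 0,
              d k < d j -> alpha k j = 1 &
              d k = d j -> alpha k j = 0 \/ alpha k j = 1]),
      (forall k : 'I_K, alpha k k = 0),
      (forall k j : 'I_K, k != j -> alpha k j + alpha j k = 1) &
      (forall k j i : 'I_K, alpha k j + alpha j i - 1 <= alpha k i)].

(* Objective values: least admissible zeta given the other variables,
   max over devices of (p_k + Pc) / E_k (written in each problem's own indexing). *)
Definition obj1 {R : realType} (K : nat) (Pc : R) (E : 'I_K -> R)
  (p : 'I_K -> R) (pi : {perm 'I_K}) : R :=
  \big[Num.max/0]_(m < K) ((p (pi m) + Pc) / E (pi m)).

Definition obj2 {R : realType} (K : nat) (Pc : R) (E : 'I_K -> R)
  (p : 'I_K -> R) : R :=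
  \big[Num.max/0]_(k < K) ((p k + Pc) / E k).

(* Main.v *)
Require Import Defs.
From HB Require Import structures.
From mathcomp Require Import all_boot all_order all_fingroup all_algebra.
From mathcomp Require Import reals exp.
From mathcomp Require Import zify.
Import Order.TTheory GRing.Theory Num.Theory.
Local Open Scope ring_scope.

Section Aux.
Variable R : realType.
Variable K : nat.
Variable alpha : 'I_K -> 'I_K -> R.
Hypothesis a01 : forall k j : 'I_K, alpha k j = 0 \/ alpha k j = 1.
Hypothesis akk : forall k : 'I_K, alpha k k = 0.
Hypothesis asym : forall k j : 'I_K, k != j -> alpha k j + alpha j k = 1.
Hypothesis atr : forall k j i : 'I_K, alpha k j + alpha j i - 1 <= alpha k i.

Definition bb (k j : 'I_K) : bool := alpha k j == 1.

Lemma alphaE k j : alpha k j = if bb k j then 1 else 0.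
Proof using a01 akk asym atr. by rewrite /bb; case: (a01 k j) => ->; rewrite ?eqxx // eq_sym oner_eq0. Qed.

Lemma bb_irr k : bb k k = false.
Proof using a01 akk asym atr. by rewrite /bb akk eq_sym oner_eq0. Qed.

Lemma bb_anti k j : k != j -> bb k j = ~~ bb j k.
Proof using a01 akk asym atr.
move=> kj; have := asym _ _ kj; rewrite (alphaE k j) (alphaE j k).
case: (bb k j); case: (bb j k) => //= e.
- by move: e => /eqP; rewrite -subr_eq0 addrK oner_eq0.
- by move: e => /eqP; rewrite addr0 eq_sym oner_eq0.
Qed.

Lemma bb_trans k j i : bb k j -> bb j i -> bb k i.
Proof using a01 akk asym atr.
move=> h1 h2; have := atr k j i; rewrite (alphaE k j) (alphaE j i) h1 h2 addrK.
rewrite (alphaE k i); case: (bb k i) => //; by rewrite ler10.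
Qed.

Definition pos (k : 'I_K) : nat := #|[set j | bb j k]|.

Lemma pos_lt k : (pos k < K)%N.
Proof using a01 akk asym atr.
rewrite /pos -[X in (_ < X)%N]card_ord -[X in (_ < X)%N](cardsT).
apply: proper_card; apply/properP; split; first exact: subsetT.
by exists k; rewrite ?inE ?bb_irr.
Qed.

Lemma bb_pos k l : bb k l -> (pos k < pos l)%N.
Proof using a01 akk asym atr.
move=> hkl; apply: proper_card; apply/properP; split.
  by apply/subsetP => j; rewrite !inE => hj; apply: bb_trans hj hkl.
by exists k; rewrite !inE ?bb_irr.
Qed.

Lemma bbE k l : bb k l = (pos k < pos l)%N.
Proof using a01 akk asym atr.
case: (eqVneq k l) => [->|kl]; first by rewrite bb_irr ltnn.
case h: (bb k l); first by rewrite (bb_pos _ _ h).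
have lk : l != k by rewrite eq_sym.
have : bb l k by rewrite (bb_anti _ _ lk) h.
by move/(bb_pos _ _) => /ltnW; rewrite leqNgt => /negbTE.
Qed.

Lemma pos_inj : injective (fun k => Ordinal (pos_lt k)).
Proof using a01 akk asym atr.
move=> k l /(congr1 val) /= e; apply/eqP; apply/negPn/negP => kl.
case h: (bb k l); first by move: (bb_pos _ _ h); rewrite e ltnn.
have lk : l != k by rewrite eq_sym.
have : bb l k by rewrite (bb_anti _ _ lk) h.
by move/(bb_pos _ _); rewrite e ltnn.
Qed.

Lemma sum_alpha k : \sum_(j < K) alpha k j = (K - 1 - pos k)%:R.
Proof using a01 akk asym atr.
rewrite (bigID (bb k)) /= [X in _ + X]big1 ?addr0; last first.
  by move=> j /negbTE hj; rewrite alphaE hj.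
rewrite (eq_bigr (fun=> 1)); last by move=> j hj; rewrite alphaE hj.
rewrite sumr_const.
have -> : #|[pred j | bb k j]| = #|~: (k |: [set j | bb j k])|.
  apply: eq_card => j; rewrite !inE /=.
  case: (eqVneq j k) => [->|jk]; first by rewrite bb_irr.
  by rewrite /= (@bb_anti k j _) // eq_sym.
have e := cardsC (k |: [set j | bb j k]); rewrite cardsU1 inE bb_irr /= card_ord in e.
apply/eqP; rewrite eqr_nat; apply/eqP; rewrite /pos; move: e.
set a := #|~: _|; set b := #|[set j | bb j k]|; lia.
Qed.

End Aux.
Arguments bb {R K}.
Arguments pos {R K}.

Theorem proposition2 (R : realType) (K : nat) (w : 'I_K -> R * R)
  (H rho0 sigma2 rstar Pc : R) (E Pt : 'I_K -> R)
  (hK : (1 <= K)%N) (hH : 0 < H) (hrho0 : 0 < rho0) (hsigma2 : 0 < sigma2)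
  (hrstar : 0 < rstar) (hPc : 0 <= Pc)
  (hE : forall k, 0 < E k) (hPt : forall k, 0 < Pt k)
  (zeta : R) (q : R * R) (p : 'I_K -> R) (alpha : 'I_K -> 'I_K -> R) :
  feasible2 w H rho0 sigma2 rstar Pc E Pt zeta q p alpha ->
  exists (pi' : {perm 'I_K}) (p' : 'I_K -> R),
    (* f(k) = K - sum_j alpha_{k,j} is a permutation (1-based), with pi' = f^{-1} *)
    (forall k : 'I_K, ((pi'^-1)%g k).+1%:R = K%:R - \sum_(j < K) alpha k j) /\
    (* p'_{pi'(m)} = p_{f^{-1}(m)} *)
    (forall m : 'I_K, p' (pi' m) = p (pi' m)) /\
    feasible1 w H rho0 sigma2 rstar Pc E Pt zeta q p' pi' /\
    obj1 Pc E p' pi' = obj2 Pc E p.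
Proof.
move=> [[h1 h2 h3] [hd akk asym atr]].
have a01 : forall k j, alpha k j = 0 \/ alpha k j = 1.
  move=> k j; case: (eqVneq k j) => [->|kj]; first by left.
  have [e1 e2 e3] := hd k j kj.
  case: (ltgtP (dist H q (w j)) (dist H q (w k))) => e.
  - by left; apply: e1.
  - by right; apply: e2.
  - by apply: e3.
pose s := perm (@pos_inj _ _ _ a01 akk asym atr).
exists (s^-1)%g, p.
split.
  move=> k; rewrite invgK permE /= (@sum_alpha _ _ _ a01 akk asym atr).
  have lt := @pos_lt _ _ _ a01 akk asym atr k.
  have -> : K%:R = ((K - 1 - pos alpha k)%:R + (pos alpha k).+1%:R :> R).
    by rewrite -natrD; congr _%:R; lia.
  by rewrite addrC addKr.
have posE : forall m, pos alpha ((s^-1)%g m) = m.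
  by move=> m; have := permKV s m; rewrite permE => /(congr1 val).
have bbP : forall m n, bb alpha ((s^-1)%g m) ((s^-1)%g n) = (m < n)%N.
  by move=> m n; rewrite (@bbE _ _ _ a01 akk asym atr) !posE.
split => //.
split; last first.
  rewrite /obj1 /obj2; apply/esym.
  exact: (reindex_inj (h := (s^-1)%g) (P := xpredT) (F := fun k => (p k + Pc) / E k) (@perm_inj _ _)).
split.
- by move=> m; apply: h1.
- by move=> m; apply: h2.
- move=> m; have := h3 ((s^-1)%g m).
  set g := gain rho0 H q.
  suff -> : \sum_(j < K | j != (s^-1)%g m) alpha ((s^-1)%g m) j * p j * g (w j)
      = \sum_(n < K | (m < n)%N) p ((s^-1)%g n) * g (w ((s^-1)%g n)) by [].
  rewrite (reindex_inj (h := (s^-1)%g) (@perm_inj _ _)) /=.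
  rewrite big_mkcond [RHS]big_mkcond /=; apply: eq_bigr => n _.
  rewrite (inj_eq (@perm_inj _ _)).
  case: (eqVneq n m) => [->|nm]; first by rewrite ltnn.
  by rewrite (@alphaE _ _ _ a01 akk asym atr) bbP; case: (m < n)%N; rewrite ?mul1r ?mul0r.
- move=> m n; rewrite leq_eqVlt => /orP [/eqP e|lt].
    by have -> : m = n by apply: val_inj.
  have a1 : alpha ((s^-1)%g m) ((s^-1)%g n) = 1.
    by rewrite (@alphaE _ _ _ a01 akk asym atr) bbP lt.
  rewrite leNgt; apply/negP => hlt.
  have mn : (s^-1)%g m != (s^-1)%g n.
    by apply/negP => /eqP /perm_inj e; move: lt; rewrite e ltnn.
  have [e1 _ _] := hd _ _ mn.
  by move: (e1 hlt); rewrite a1 => /eqP; rewrite oner_eq0.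
Qed.
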